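(* Let $I$ be a finite index set, $E_i$ ($i\in I$) and $F$ nondeterministic expressions, $X$ a variable, and $p_i>0$ with $\sum_{i\in I}p_i=1$. Then $\mathrm{rec}\,X.\big(\tau.\bigoplus_{i\in I}p_i(X+E_i)+F\big)\ \simeq\ \mathrm{rec}\,X.\big(\tau.\partial(X)+\sum_{i\in I}E_i+F\big)$.
   Context: Fix a set $\mathsf{Act}$ of actions containing $\tau$ and a set $\mathsf{Var}$ of variables. Nondeterministic expressions: $E ::= 0 \mid X \mid \alpha.P \mid \mathrm{rec}\,X.E \mid E + E$; probabilistic expressions: $P ::= \partial(E) \mid P \oplus_p P$ ($0<p<1$). $\sum_{i\in I}E_i$ is an iterated $+$; $\bigoplus_{i\in I}p_iE_i$ denotes an iterated $\oplus$ of the $\partial(E_i)$ with weights chosen so that $E_i$ has probability $p_i$. $\mathrm{rec}\,X$ binds $X$; closed means no free variables; $E[\vec F/\vec X]$ is capture-avoiding substitution. Subdistributions $\mu$ over $S$: $\mu:S\to\mathbb R_{\ge0}$, $|\mu|=\sum\mu(s)\le1$; $\delta_s$ Dirac. Semantics: least relations with $\partial(E)\mapsto\delta_E$; $P\oplus_pQ\mapsto p\mu+(1-p)\nu$ if $P\mapsto\mu,Q\mapsto\nu$; $\alpha.P\xrightarrow{\alpha}\mu$ if $P\mapsto\mu$; $\mathrm{rec}\,X.E\xrightarrow{\alpha}\mu$ if $E[\mathrm{rec}\,X.E/X]\xrightarrow{\alpha}\mu$; $E+F\xrightarrow{\alpha}\mu$ and $F+E\xrightarrow{\alpha}\mu$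 if $E\xrightarrow{\alpha}\mu$. Combined transitions on subdistributions: least relation with $\delta_E\xrightarrow{\alpha}\mu$ if $E\xrightarrow{\alpha}\mu$, closed under $\sum p_i\nu_i\xrightarrow{\alpha}\sum p_i\mu_i$ ($\nu_i\xrightarrow{\alpha}\mu_i$, $p_i\ge0$, $\sum p_i\le1$). A derivation is $(\mu_i^{\to},\mu_i^{\times})_{i\in\mathbb N}$ with $\mu_i^{\to}\xrightarrow{\tau}\mu^{\to}_{i+1}+\mu^{\times}_{i+1}$; $\mu\Rightarrow\nu$ iff a derivation has $\mu=\mu_0^{\to}+\mu_0^{\times}$, $\nu=\sum_i\mu_i^\times$. $\mu\xRightarrow{\alpha}\nu$ iff $\mu\Rightarrow\xrightarrow{\alpha}\Rightarrow\nu$; $\xRightarrow{\hat\alpha}$ is $\Rightarrow$ for $\alpha=\tau$, else $\xRightarrow{\alpha}$. Lifting of a relation to subdistributions: least relation with $\delta_E\mathcal R\delta_F$ for $E\mathcal RF$, closed under convex combinations with coefficients summing to at most 1. Weak bisimulation on closed expressions: if $E\mathcal RF$ and $E\xrightarrow{\alpha}\mu$ then $F\xRightarrow{\hat\alpha}\nu$ with $\mu\mathcal R\nu$, and symmetrically; $\approx$ is weak bisimilarity. For closed $E,F$: $E\simeq F$ iff $E\xrightarrow{\alpha}\mu$ implies $F\xRightarrow{\alpha}\nu$ with $\mu\approx\nu$ and symmetrically. For open expressions with free variables $\vec X$: $E\simeq F$ iff $E[\vec G/\vec X]\simeq F[\vec G/\vec X]$ for all closed $\vec G$. *)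

(* Defs.v *)
From Stdlib Require Import Reals List.
From Stdlib Require Import ClassicalEpsilon.
Import ListNotations.
Open Scope R_scope.

(* ---------- Syntax (locally nameless / de Bruijn variables) ----------
   Variables are de Bruijn indices: [Var 0] under a [Rec] refers to the
   variable bound by that [Rec]. *)
Inductive nexpr (Act : Type) : Type :=
| Nil : nexpr Act
| Var : nat -> nexpr Act
| Pre : Act -> pexpr Act -> nexpr Act
| Rec : nexpr Act -> nexpr Act
| Sum : nexpr Act -> nexpr Act -> nexpr Act
with pexpr (Act : Type) : Type :=
| Dirac : nexpr Act -> pexpr Act
| PSum : R -> pexpr Act -> pexpr Act -> pexpr Act.

Arguments Nil {Act}.
Arguments Var {Act} _.
Arguments Pre {Act} _ _.
Arguments Rec {Act} _.
Arguments Sum {Act} _ _.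
Arguments Dirac {Act} _.
Arguments PSum {Act} _ _ _.

Fixpoint wfN {Act} (E : nexpr Act) : Prop :=
  match E with
  | Nil => True
  | Var _ => True
  | Pre _ P => wfP P
  | Rec E => wfN E
  | Sum E F => wfN E /\ wfN F
  end
with wfP {Act} (P : pexpr Act) : Prop :=
  match P with
  | Dirac E => wfN E
  | PSum p P Q => (0 < p < 1) /\ wfP P /\ wfP Q
  end.

Fixpoint closedN_at {Act} (k : nat) (E : nexpr Act) : Prop :=
  match E with
  | Nil => True
  | Var n => (n < k)%nat
  | Pre _ P => closedP_at k P
  | Rec E => closedN_at (S k) E
  | Sum E F => closedN_at k E /\ closedN_at k F
  end
with closedP_at {Act} (k : nat) (P : pexpr Act) : Prop :=
  match P with
  | Dirac E => closedN_at k E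
  | PSum _ P Q => closedP_at k P /\ closedP_at k Q
  end.

Definition cexpr {Act} (E : nexpr Act) : Prop := closedN_at 0 E /\ wfN E.

Fixpoint renN {Act} (r : nat -> nat) (E : nexpr Act) : nexpr Act :=
  match E with
  | Nil => Nil
  | Var n => Var (r n)
  | Pre a P => Pre a (renP r P)
  | Rec E => Rec (renN (fun n => match n with O => O | S m => S (r m) end) E)
  | Sum E F => Sum (renN r E) (renN r F)
  end
with renP {Act} (r : nat -> nat) (P : pexpr Act) : pexpr Act :=
  match P with
  | Dirac E => Dirac (renN r E)
  | PSum p P Q => PSum p (renP r P) (renP r Q)
  end.

Definition up {Act} (s : nat -> nexpr Act) : nat -> nexpr Act :=
  fun n => match n with O => Var O | S m => renN S (s m) end.

Fixpoint substN {Act} (s : nat -> nexpr Act) (E : nexpr Act) : nexpr Act :=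
  match E with
  | Nil => Nil
  | Var n => s n
  | Pre a P => Pre a (substP s P)
  | Rec E => Rec (substN (up s) E)
  | Sum E F => Sum (substN s E) (substN s F)
  end
with substP {Act} (s : nat -> nexpr Act) (P : pexpr Act) : pexpr Act :=
  match P with
  | Dirac E => Dirac (substN s E)
  | PSum p P Q => PSum p (substP s P) (substP s Q)
  end.

Definition subst0 {Act} (G E : nexpr Act) : nexpr Act :=
  substN (fun n => match n with O => G | S m => Var m end) E.

Definition dist (Act : Type) := nexpr Act -> R.

Definition dirac {Act} (E : nexpr Act) : dist Act :=
  fun s => if excluded_middle_informative (s = E) then 1 else 0.

Definition weights (p : nat -> R) : Prop :=
  (forall i, 0 <= p i) /\ exists l, infinite_sum p l /\ l <= 1.

Definition is_comb {Act} (p : nat -> R) (mus : nat -> dist Act) (mu : dist Act) : Prop :=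
  forall s, infinite_sum (fun i => p i * mus i s) (mu s).

Inductive pstep {Act} : pexpr Act -> dist Act -> Prop :=
| pstep_dirac E : pstep (Dirac E) (dirac E)
| pstep_psum p P Q mu nu :
    pstep P mu -> pstep Q nu ->
    pstep (PSum p P Q) (fun s => p * mu s + (1 - p) * nu s).

Inductive trans {Act} : nexpr Act -> Act -> dist Act -> Prop :=
| trans_pre a P mu : pstep P mu -> trans (Pre a P) a mu
| trans_rec E a mu : trans (subst0 (Rec E) E) a mu -> trans (Rec E) a mu
| trans_suml E F a mu : trans E a mu -> trans (Sum E F) a mu
| trans_sumr E F a mu : trans E a mu -> trans (Sum F E) a mu.

Inductive ctrans {Act} : dist Act -> Act -> dist Act -> Prop :=
| ctrans_dirac E a mu : trans E a mu -> ctrans (dirac E) a mu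
| ctrans_comb a p nus mus nu mu :
    weights p -> (forall i, ctrans (nus i) a (mus i)) ->
    is_comb p nus nu -> is_comb p mus mu -> ctrans nu a mu.

Definition derivation {Act} (tau : Act) (mto mx : nat -> dist Act) : Prop :=
  (forall i s, 0 <= mto i s /\ 0 <= mx i s) /\
  forall i, ctrans (mto i) tau (fun s => mto (S i) s + mx (S i) s).

Definition wstep {Act} (tau : Act) (mu nu : dist Act) : Prop :=
  exists mto mx, derivation tau mto mx /\
    (forall s, mu s = mto 0%nat s + mx 0%nat s) /\
    (forall s, infinite_sum (fun i => mx i s) (nu s)).

Definition wtrans {Act} (tau : Act) (mu : dist Act) (a : Act) (nu : dist Act) : Prop :=
  exists mu1 mu2, wstep tau mu mu1 /\ ctrans mu1 a mu2 /\ wstep tau mu2 nu.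

Definition wtrans_hat {Act} (tau : Act) (mu : dist Act) (a : Act) (nu : dist Act) : Prop :=
  (a = tau /\ wstep tau mu nu) \/ (a <> tau /\ wtrans tau mu a nu).

Inductive lift {Act} (Rl : nexpr Act -> nexpr Act -> Prop) : dist Act -> dist Act -> Prop :=
| lift_dirac E F : Rl E F -> lift Rl (dirac E) (dirac F)
| lift_comb p mus nus mu nu :
    weights p -> (forall i, lift Rl (mus i) (nus i)) ->
    is_comb p mus mu -> is_comb p nus nu -> lift Rl mu nu.

Definition weak_bisim {Act} (tau : Act) (Rl : nexpr Act -> nexpr Act -> Prop) : Prop :=
  (forall E F, Rl E F -> cexpr E /\ cexpr F) /\
  (forall E F, Rl E F ->
     (forall a mu, trans E a mu -> exists nu, wtrans_hat tau (dirac F) a nu /\ lift Rl mu nu) /\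
     (forall a nu, trans F a nu -> exists mu, wtrans_hat tau (dirac E) a mu /\ lift Rl mu nu)).

Definition wbisimilar {Act} (tau : Act) (E F : nexpr Act) : Prop :=
  exists Rl, weak_bisim tau Rl /\ Rl E F.

Definition ccong {Act} (tau : Act) (E F : nexpr Act) : Prop :=
  (forall a mu, trans E a mu -> exists nu, wtrans tau (dirac F) a nu /\ lift (wbisimilar tau) mu nu) /\
  (forall a nu, trans F a nu -> exists mu, wtrans tau (dirac E) a mu /\ lift (wbisimilar tau) mu nu).

Definition cong {Act} (tau : Act) (E F : nexpr Act) : Prop :=
  forall s : nat -> nexpr Act, (forall n, cexpr (s n)) ->
    ccong tau (substN s E) (substN s F).

Fixpoint sumR (l : list R) : R :=
  match l with [] => 0 | x :: r => x + sumR r end.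

Fixpoint bigsum {Act} (l : list (nexpr Act)) : nexpr Act :=
  match l with
  | [] => Nil
  | [E] => E
  | E :: r => Sum E (bigsum r)
  end.

(* iterated (+)_p with weights making E_i have probability p_i / (sum of all p) *)
Fixpoint bigoplus {Act} (l : list (R * nexpr Act)) : pexpr Act :=
  match l with
  | [] => Dirac Nil
  | [(p, E)] => Dirac E
  | (p, E) :: r => PSum (p / (p + sumR (map fst r))) (Dirac E) (bigoplus r)
  end.

(* Main.v *)
Require Import Defs.
From Stdlib Require Import Reals List Lia Lra.
From Stdlib Require Import Classical ClassicalEpsilon FunctionalExtensionality.
Import ListNotations.
Open Scope R_scope.

Scheme nexpr_mind := Induction for nexpr Sort Prop
  with pexpr_mind := Induction for pexpr Sort Prop.
Combined Scheme expr_mind from nexpr_mind, pexpr_mind.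

Section Syn.
Context {Act : Type}.

Lemma ren_ext : (forall E : nexpr Act, forall r r', (forall n, r n = r' n) -> renN r E = renN r' E)
  /\ (forall P : pexpr Act, forall r r', (forall n, r n = r' n) -> renP r P = renP r' P).
Proof.
  apply expr_mind; intros; simpl; f_equal; auto.
  apply H. intros [|k]; simpl; auto.
Qed.

Lemma subst_ext : (forall E : nexpr Act, forall r r', (forall n, r n = r' n) -> substN r E = substN r' E)
  /\ (forall P : pexpr Act, forall r r', (forall n, r n = r' n) -> substP r P = substP r' P).
Proof.
  apply expr_mind; intros; simpl; f_equal; auto.
  apply H. intros [|k]; simpl; auto. unfold Defs.up. rewrite H0. auto.
Qed.

Lemma ren_ren : (forall E : nexpr Act, forall r r', renN r (renN r' E) = renN (fun n => r (r' n)) E)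
  /\ (forall P : pexpr Act, forall r r', renP r (renP r' P) = renP (fun n => r (r' n)) P).
Proof.
  apply expr_mind; intros; simpl; f_equal; auto.
  rewrite H. apply (proj1 ren_ext). intros [|k]; simpl; auto.
Qed.

Lemma ren_subst : (forall E : nexpr Act, forall s r, substN s (renN r E) = substN (fun n => s (r n)) E)
  /\ (forall P : pexpr Act, forall s r, substP s (renP r P) = substP (fun n => s (r n)) P).
Proof.
  apply expr_mind; intros; simpl; f_equal; auto.
  rewrite H. apply (proj1 subst_ext). intros [|k]; simpl; auto.
Qed.

Lemma subst_ren : (forall E : nexpr Act, forall s r, renN r (substN s E) = substN (fun n => renN r (s n)) E)
  /\ (forall P : pexpr Act, forall s r, renP r (substP s P) = substP (fun n => renN r (s n)) P).
Proof.
  apply expr_mind; intros; simpl; f_equal; auto.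
  rewrite H. apply (proj1 subst_ext). intros [|k]; simpl; auto.
  rewrite !(proj1 ren_ren). apply (proj1 ren_ext). intros; simpl; auto.
Qed.

Lemma subst_subst : (forall E : nexpr Act, forall s t, substN t (substN s E) = substN (fun n => substN t (s n)) E)
  /\ (forall P : pexpr Act, forall s t, substP t (substP s P) = substP (fun n => substN t (s n)) P).
Proof.
  apply expr_mind; intros; simpl; f_equal; auto.
  rewrite H. apply (proj1 subst_ext). intros [|k]; simpl; auto.
  rewrite (proj1 ren_subst). rewrite (proj1 subst_ren). reflexivity.
Qed.

Lemma subst_id : (forall E : nexpr Act, forall s, (forall n, s n = Var n) -> substN s E = E)
  /\ (forall P : pexpr Act, forall s, (forall n, s n = Var n) -> substP s P = P).
Proof.
  apply expr_mind; intros; simpl; f_equal; auto.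
  apply H. intros [|k]; simpl; auto. unfold Defs.up. rewrite H0. reflexivity.
Qed.

Definition sig0 (H : nexpr Act) : nat -> nexpr Act :=
  fun n => match n with O => H | S m => Var m end.

Lemma unfold_subst H K :
  subst0 (Rec (substN (Defs.up (sig0 H)) K)) (substN (Defs.up (sig0 H)) K)
  = subst0 H (subst0 (Rec K) K).
Proof.
  unfold subst0. rewrite !(proj1 subst_subst).
  apply (proj1 subst_ext). intros [|[|k]]; simpl; auto.
  rewrite (proj1 ren_subst). apply (proj1 subst_id). intros; reflexivity.
Qed.

End Syn.

Section Cl.
Context {Act : Type}.

Lemma closed_ren : (forall E : nexpr Act, forall k k' r, closedN_at k E -> (forall n, (n < k)%nat -> (r n < k')%nat) -> closedN_at k' (renN r E))
  /\ (forall P : pexpr Act, forall k k' r, closedP_at k P -> (forall n, (n < k)%nat -> (r n < k')%nat) -> closedP_at k' (renP r P)).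
Proof.
  apply expr_mind; intros; simpl in *; intuition eauto.
  eapply H; eauto. intros [|j] Hj; lia || (specialize (H1 j); lia).
Qed.

Lemma closed_subst : (forall E : nexpr Act, forall k m s, closedN_at k E -> (forall n, (n < k)%nat -> closedN_at m (s n)) -> closedN_at m (substN s E))
  /\ (forall P : pexpr Act, forall k m s, closedP_at k P -> (forall n, (n < k)%nat -> closedN_at m (s n)) -> closedP_at m (substP s P)).
Proof.
  apply expr_mind; intros; simpl in *; intuition eauto.
  eapply H; eauto. intros [|j] Hj; simpl. lia.
  eapply (proj1 closed_ren); [apply H1; lia|]. intros; lia.
Qed.

Lemma closed_subst_all : (forall E : nexpr Act, forall m s, (forall n, closedN_at m (s n)) -> closedN_at m (substN s E))
  /\ (forall P : pexpr Act, forall m s, (forall n, closedN_at m (s n)) -> closedP_at m (substP s P)).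
Proof.
  apply expr_mind; intros; simpl in *; intuition eauto.
  eapply H; eauto. intros [|j]; simpl. lia.
  eapply (proj1 closed_ren); [apply H0|]. intros; lia.
Qed.

Lemma wf_ren : (forall E : nexpr Act, forall r, wfN E -> wfN (renN r E))
  /\ (forall P : pexpr Act, forall r, wfP P -> wfP (renP r P)).
Proof. apply expr_mind; intros; simpl in *; intuition eauto. Qed.

Lemma wf_subst : (forall E : nexpr Act, forall s, wfN E -> (forall n, wfN (s n)) -> wfN (substN s E))
  /\ (forall P : pexpr Act, forall s, wfP P -> (forall n, wfN (s n)) -> wfP (substP s P)).
Proof.
  apply expr_mind; intros; simpl in *; intuition eauto.
  apply H; auto. intros [|j]; simpl; auto. apply (proj1 wf_ren); auto.
Qed.

Lemma wf_sig0 (H : nexpr Act) : wfN H -> forall n, wfN (sig0 H n).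
Proof. intros ? [|n]; simpl; auto. Qed.

Lemma closed_sig0 (H : nexpr Act) : closedN_at 0 H -> forall n, (n < 1)%nat -> closedN_at 0 (sig0 H n).
Proof. intros ? [|n] ?; simpl; auto. lia. Qed.

Lemma cexpr_subst0 (H G : nexpr Act) : cexpr H -> closedN_at 1 G -> wfN G -> cexpr (subst0 H G).
Proof.
  intros [Hc Hw] Gc Gw. split.
  - eapply (proj1 closed_subst); eauto. apply closed_sig0; auto.
  - apply (proj1 wf_subst); auto. apply wf_sig0; auto.
Qed.

Lemma unfold_closed (K : nexpr Act) : closedN_at 1 (Rec K) -> closedN_at 1 (subst0 (Rec K) K).
Proof.
  intros Hc. simpl in Hc. eapply (proj1 closed_subst); eauto.
  intros [|[|j]] Hj; simpl; auto; lia.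
Qed.

Lemma unfold_wf (K : nexpr Act) : wfN K -> wfN (subst0 (Rec K) K).
Proof.
  intros Hw. apply (proj1 wf_subst); auto. intros [|j]; simpl; auto.
Qed.

End Cl.

Section Ctx.
Context {Act : Type}.

Inductive cstep : nexpr Act -> Act -> pexpr Act -> Prop :=
| cs_pre a P : cstep (Pre a P) a P
| cs_suml G1 G2 a P : cstep G1 a P -> cstep (Sum G1 G2) a P
| cs_sumr G1 G2 a P : cstep G2 a P -> cstep (Sum G1 G2) a P
| cs_rec K a P : cstep (subst0 (Rec K) K) a P -> cstep (Rec K) a P.

Inductive ug : nexpr Act -> Prop :=
| ug_var : ug (Var 0)
| ug_suml G1 G2 : ug G1 -> ug (Sum G1 G2)
| ug_sumr G1 G2 : ug G2 -> ug (Sum G1 G2)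
| ug_rec K : ug (subst0 (Rec K) K) -> ug (Rec K).

Lemma subst0_rec (H K : nexpr Act) : subst0 H (Rec K) = Rec (substN (Defs.up (sig0 H)) K).
Proof. reflexivity. Qed.

Lemma cstep_trans (G : nexpr Act) a P H mu : cstep G a P -> pstep (substP (sig0 H) P) mu -> trans (subst0 H G) a mu.
Proof.
  intros Hc; revert mu; induction Hc; intros mu Hp.
  - constructor. exact Hp.
  - apply trans_suml. auto.
  - apply trans_sumr. auto.
  - rewrite subst0_rec. apply trans_rec. rewrite unfold_subst. auto.
Qed.

Lemma ug_trans (G H : nexpr Act) a mu : ug G -> trans H a mu -> trans (subst0 H G) a mu.
Proof.
  intros Hu Ht; induction Hu.
  - exact Ht.
  - apply trans_suml. auto.
  - apply trans_sumr. auto.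
  - rewrite subst0_rec. apply trans_rec. rewrite unfold_subst. auto.
Qed.

Lemma ctx (B G : nexpr Act) a mu : trans (subst0 (Rec B) G) a mu ->
  (exists P, cstep G a P /\ pstep (substP (sig0 (Rec B)) P) mu) \/
  (ug G /\ exists P, cstep B a P /\ pstep (substP (sig0 (Rec B)) P) mu).
Proof.
  intros Ht. remember (subst0 (Rec B) G) as t eqn:Et. revert G Et.
  induction Ht; intros G Et.
  - destruct G as [| [|k] | a' P' | K | G1 G2]; simpl in Et; try discriminate.
    injection Et; intros; subst. left. exists P'. split; [constructor|auto].
  - destruct G as [| [|k] | a' P' | K | G1 G2]; try discriminate.
    + cbn in Et. injection Et; intros; subst.
      destruct (IHHt B eq_refl) as [[P [H1 H2]] | [_ [P [H1 H2]]]];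
        right; split; try constructor; eauto.
    + rewrite subst0_rec in Et. injection Et; intros; subst.
      rewrite unfold_subst in IHHt.
      destruct (IHHt _ eq_refl) as [[P [H1 H2]] | [Hu [P [H1 H2]]]].
      * left. exists P. split; auto. constructor; auto.
      * right. split; [constructor; auto|eauto].
  - destruct G as [| [|k] | a' P' | K | G1 G2]; try discriminate.
    cbn in Et. injection Et; intros; subst.
    destruct (IHHt _ eq_refl) as [[P [H1 H2]] | [Hu [P [H1 H2]]]].
    + left. exists P. split; auto. constructor; auto.
    + right. split; [constructor; auto|eauto].
  - destruct G as [| [|k] | a' P' | K | G1 G2]; try discriminate.
    cbn in Et. injection Et; intros; subst.
    destruct (IHHt _ eq_refl) as [[P [H1 H2]] | [Hu [P [H1 H2]]]].
    + left. exists P. split; auto. apply cs_sumr; auto.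
    + right. split; [apply ug_sumr; auto|eauto].
Qed.

Lemma cstep_closed (G : nexpr Act) a P : cstep G a P -> closedN_at 1 G -> closedP_at 1 P.
Proof.
  induction 1; simpl; intuition.
  apply IHcstep. apply unfold_closed. exact H0.
Qed.

Lemma cstep_wf (G : nexpr Act) a P : cstep G a P -> wfN G -> wfP P.
Proof.
  induction 1; simpl; intuition.
  apply IHcstep. apply unfold_wf. exact H0.
Qed.

End Ctx.

Lemma inf_shift g x a : infinite_sum g x ->
  infinite_sum (fun i => match i with 0%nat => a | S k => g k end) (a + x).
Proof.
  intros Hg eps He. destruct (Hg eps He) as [N HN]. exists (S N). intros n Hn.
  destruct n as [|n]; [lia|].
  rewrite decomp_sum by lia. simpl. unfold Rdist in *.
  match goal with |- context [Rabs ?z] => replace z with (sum_f_R0 g n - x) end. 2:{ rewrite (sum_eq (fun i => g i) g n) by auto. ring. }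
  apply HN. lia.
Qed.

Lemma inf_zero : infinite_sum (fun _ => 0) 0.
Proof.
  intros eps He. exists 0%nat. intros n _. rewrite sum_cte. unfold Rdist.
  replace (0 * INR (S n) - 0) with 0 by ring. rewrite Rabs_R0. lra.
Qed.

Lemma inf_ext f g x : (forall i, f i = g i) -> infinite_sum f x -> infinite_sum g x.
Proof.
  intros E Hf. replace g with f; auto. apply functional_extensionality; auto.
Qed.

Lemma inf_scale g l x : infinite_sum g l -> infinite_sum (fun n => x * g n) (x * l).
Proof.
  intros Hg eps He.
  destruct (Req_dec x 0) as [Hx|Hx].
  - subst. exists 0%nat. intros n _. unfold Rdist.
    replace (sum_f_R0 (fun n0 => 0 * g n0) n) with (sum_f_R0 (fun _ => 0) n).
    2:{ apply sum_eq. intros; ring. }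
    rewrite sum_cte. replace (0 * INR (S n) - 0 * l) with 0 by ring. rewrite Rabs_R0. lra.
  - assert (Ha : Rabs x > 0) by (apply Rabs_pos_lt; auto).
    destruct (Hg (eps / Rabs x)) as [N HN].
    { apply Rdiv_lt_0_compat; lra. }
    exists N. intros n Hn. specialize (HN n Hn). unfold Rdist in *.
    assert (E : sum_f_R0 (fun n0 => x * g n0) n = x * sum_f_R0 g n).
    { rewrite scal_sum. apply sum_eq. intros; ring. }
    rewrite E. replace (x * sum_f_R0 g n - x * l) with (x * (sum_f_R0 g n - l)) by ring.
    rewrite Rabs_mult.
    apply Rmult_lt_compat_l with (r := Rabs x) in HN; auto.
    replace (Rabs x * (eps / Rabs x)) with eps in HN by (field; lra). lra.
Qed.

Lemma fin_sum {A} (l : list A) (d : A) (f : A -> R) : f d = 0 ->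
  infinite_sum (fun i => f (nth i l d)) (sumR (map f l)).
Proof.
  intros Hd. induction l as [|x l IH]; simpl.
  - eapply inf_ext; [|apply inf_zero]. intros [|i]; simpl; auto.
  - eapply inf_ext; [|apply (inf_shift _ _ (f x) IH)]. intros [|i]; simpl; auto.
Qed.

Lemma inf_geo x c : 0 <= c < 1 -> infinite_sum (fun k => x * c ^ k) (x / (1 - c)).
Proof.
  intros Hc. pose proof (GP_infinite c) as G. unfold Pser in G.
  assert (Rabs c < 1) by (rewrite Rabs_right; lra).
  specialize (G H). apply inf_scale with (x := x) in G.
  eapply inf_ext; [|unfold Rdiv; exact G]. intros; simpl; ring.
Qed.

Lemma sumR_nonneg {A} (l : list A) f : (forall x, In x l -> 0 <= f x) -> 0 <= sumR (map f l).
Proof.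
  induction l; simpl; intros H; [lra|].
  pose proof (H a (or_introl eq_refl)). pose proof (IHl (fun x h => H x (or_intror h))). lra.
Qed.

Lemma sumR_plus {A} (l : list A) f g : sumR (map (fun x => f x + g x) l) = sumR (map f l) + sumR (map g l).
Proof. induction l; simpl; [ring|rewrite IHl; ring]. Qed.

Lemma sumR_scale {A} (l : list A) f c : sumR (map (fun x => c * f x) l) = c * sumR (map f l).
Proof. induction l; simpl; [ring|rewrite IHl; ring]. Qed.

Lemma sumR_ext {A} (l : list A) f g : (forall x, In x l -> f x = g x) -> sumR (map f l) = sumR (map g l).
Proof.
  induction l; simpl; intros H; auto. rewrite H by auto. rewrite IHl; auto.
Qed.

Lemma sumR_le {A} (l : list A) f g : (forall x, In x l -> f x <= g x) -> sumR (map f l) <= sumR (map g l).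
Proof.
  induction l; simpl; intros H; [lra|].
  pose proof (H a (or_introl eq_refl)). pose proof (IHl (fun x h => H x (or_intror h))). lra.
Qed.

Lemma weights_list {A} (l : list A) (d : A) (w : A -> R) :
  w d = 0 -> (forall x, In x l -> 0 <= w x) -> sumR (map w l) <= 1 ->
  weights (fun i => w (nth i l d)).
Proof.
  intros Hd Hp Hs. split.
  - intros i. destruct (Nat.lt_ge_cases i (length l)).
    + apply Hp. apply nth_In; auto.
    + rewrite nth_overflow by auto. lra.
  - exists (sumR (map w l)). split; auto. apply fin_sum; auto.
Qed.

Section Dist.
Context {Act : Type}.

Lemma pstep_ex (P : pexpr Act) : exists mu, pstep P mu.
Proof.
  induction P as [E|p P1 [m1 H1] P2 [m2 H2]].
  - eexists; constructor.
  - eexists; constructor; eauto.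
Qed.

Lemma pstep_fun (P : pexpr Act) mu nu : pstep P mu -> pstep P nu -> mu = nu.
Proof.
  intros H1; revert nu; induction H1; intros nu' H2; inversion H2; subst; auto.
  rewrite (IHpstep1 _ H4), (IHpstep2 _ H5). auto.
Qed.

Lemma dirac_nonneg (E : nexpr Act) s : 0 <= dirac E s.
Proof. unfold dirac. destruct excluded_middle_informative; lra. Qed.

Lemma pstep_nonneg (P : pexpr Act) mu : pstep P mu -> wfP P -> forall s, 0 <= mu s.
Proof.
  induction 1; simpl; intros Hw s.
  - apply dirac_nonneg.
  - destruct Hw as [Hp [H1 H2]]. specialize (IHpstep1 H1 s). specialize (IHpstep2 H2 s).
    apply Rplus_le_le_0_compat; apply Rmult_le_pos; lra.
Qed.

Lemma trans_nonneg (E : nexpr Act) a mu : trans E a mu -> wfN E -> forall s, 0 <= mu s.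
Proof.
  induction 1; simpl; intros Hw.
  - eapply pstep_nonneg; eauto.
  - apply IHtrans. apply unfold_wf; auto.
  - apply IHtrans; tauto.
  - apply IHtrans; tauto.
Qed.

Definition zero : Defs.dist Act := fun _ => 0.

Lemma ctrans_list (a : Act) (ws : list (R * Defs.dist Act * Defs.dist Act)) (d : Defs.dist Act * Defs.dist Act) :
  ctrans (fst d) a (snd d) ->
  (forall x, In x ws -> 0 <= fst (fst x) /\ ctrans (snd (fst x)) a (snd x)) ->
  sumR (map (fun x => fst (fst x)) ws) <= 1 ->
  ctrans (fun s => sumR (map (fun x => fst (fst x) * snd (fst x) s) ws)) a
         (fun s => sumR (map (fun x => fst (fst x) * snd x s) ws)).
Proof.
  intros Hd Hw Hs.
  set (d0 := (0, fst d, snd d)).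
  apply (ctrans_comb a (fun i => fst (fst (nth i ws d0))) (fun i => snd (fst (nth i ws d0)))
          (fun i => snd (nth i ws d0))).
  - apply (weights_list ws d0 (fun x => fst (fst x))); auto. intros x Hx; apply Hw; auto.
  - intros i. destruct (Nat.lt_ge_cases i (length ws)).
    + apply Hw. apply nth_In; auto.
    + rewrite nth_overflow by auto. exact Hd.
  - intros s. apply (fin_sum ws d0 (fun x => fst (fst x) * snd (fst x) s)). simpl; ring.
  - intros s. apply (fin_sum ws d0 (fun x => fst (fst x) * snd x s)). simpl; ring.
Qed.

Lemma lift_list (Rl : nexpr Act -> nexpr Act -> Prop) (ws : list (R * Defs.dist Act * Defs.dist Act)) (d : Defs.dist Act * Defs.dist Act) :
  lift Rl (fst d) (snd d) ->
  (forall x, In x ws -> 0 <= fst (fst x) /\ lift Rl (snd (fst x)) (snd x)) ->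
  sumR (map (fun x => fst (fst x)) ws) <= 1 ->
  lift Rl (fun s => sumR (map (fun x => fst (fst x) * snd (fst x) s) ws))
         (fun s => sumR (map (fun x => fst (fst x) * snd x s) ws)).
Proof.
  intros Hd Hw Hs.
  set (d0 := (0, fst d, snd d)).
  apply (lift_comb Rl (fun i => fst (fst (nth i ws d0))) (fun i => snd (fst (nth i ws d0)))
          (fun i => snd (nth i ws d0))).
  - apply (weights_list ws d0 (fun x => fst (fst x))); auto. intros x Hx; apply Hw; auto.
  - intros i. destruct (Nat.lt_ge_cases i (length ws)).
    + apply Hw. apply nth_In; auto.
    + rewrite nth_overflow by auto. exact Hd.
  - intros s. apply (fin_sum ws d0 (fun x => fst (fst x) * snd (fst x) s)). simpl; ring.
  - intros s. apply (fin_sum ws d0 (fun x => fst (fst x) * snd x s)). simpl; ring.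
Qed.

Lemma ctrans_ext (nu nu' : Defs.dist Act) a mu mu' : ctrans nu a mu -> (forall s, nu s = nu' s) -> (forall s, mu s = mu' s) -> ctrans nu' a mu'.
Proof.
  intros H E1 E2. replace nu' with nu by (apply functional_extensionality; auto).
  replace mu' with mu by (apply functional_extensionality; auto). auto.
Qed.

Lemma lift_ext Rl (nu nu' : Defs.dist Act) mu mu' : lift Rl nu mu -> (forall s, nu s = nu' s) -> (forall s, mu s = mu' s) -> lift Rl nu' mu'.
Proof.
  intros H E1 E2. replace nu' with nu by (apply functional_extensionality; auto).
  replace mu' with mu by (apply functional_extensionality; auto). auto.
Qed.

Lemma ctrans_scale (nu : Defs.dist Act) a mu c : ctrans nu a mu -> 0 <= c <= 1 ->
  ctrans (fun s => c * nu s) a (fun s => c * mu s).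
Proof.
  intros H Hc. eapply ctrans_ext.
  - apply (ctrans_list a [(c, nu, mu)] (nu, mu)); auto.
    + intros x [<-|[]]; simpl; split; auto; lra.
    + simpl; lra.
  - intros; simpl; ring.
  - intros; simpl; ring.
Qed.

Lemma lift_mono (Rl Rl' : nexpr Act -> nexpr Act -> Prop) mu nu :
  (forall x y, Rl x y -> Rl' x y) -> lift Rl mu nu -> lift Rl' mu nu.
Proof.
  intros Hi H; induction H.
  - constructor; auto.
  - eapply lift_comb; eauto.
Qed.

End Dist.

Lemma inf_shift' g x a y : infinite_sum g x -> y = a + x ->
  infinite_sum (fun i => match i with 0%nat => a | S k => g k end) y.
Proof. intros H ->. apply inf_shift; auto. Qed.

Lemma pow_le1 c k : 0 <= c <= 1 -> 0 <= c ^ k <= 1.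
Proof.
  intros Hc. induction k; simpl; [lra|].
  split; [apply Rmult_le_pos; lra|].
  replace 1 with (1 * 1) by ring. apply Rmult_le_compat; lra.
Qed.

Section W.
Context {Act : Type} (tau : Act).

Lemma zero_ctrans (nu0 mu0 : Defs.dist Act) : ctrans nu0 tau mu0 -> ctrans (fun _ => 0) tau (fun _ => 0).
Proof.
  intros H. eapply ctrans_ext. apply (ctrans_scale _ _ _ 0 H). lra.
  all: intros; simpl; ring.
Qed.

Lemma wstep_ext (mu nu nu' : Defs.dist Act) : wstep tau mu nu -> (forall s, nu s = nu' s) -> wstep tau mu nu'.
Proof.
  intros H E. replace nu' with nu by (apply functional_extensionality; auto). auto.
Qed.

Lemma wstep_zero (nu0 mu0 mu : Defs.dist Act) : ctrans nu0 tau mu0 -> (forall s, 0 <= mu s) -> wstep tau mu mu.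
Proof.
  intros H0 Hn.
  exists (fun _ => fun _ => 0), (fun i => match i with 0%nat => mu | S _ => fun _ => 0 end).
  split; [split|split].
  - intros [|i] s; simpl; split; auto; lra.
  - intros i. eapply ctrans_ext. apply (zero_ctrans _ _ H0). all: intros; simpl; ring.
  - intros s; simpl; ring.
  - intros s. eapply inf_ext; [|apply inf_shift' with (g := fun _ => 0) (a := mu s) (x := 0); [apply inf_zero|ring]].
    intros [|i]; reflexivity.
Qed.

Lemma wstep_geo (S0 : nexpr Act) (rho xi0 xi : Defs.dist Act) c :
  ctrans (dirac S0) tau (fun s => rho s + xi0 s) ->
  ctrans rho tau (fun s => c * rho s + xi s) -> 0 <= c < 1 ->
  (forall s, 0 <= rho s) -> (forall s, 0 <= xi0 s) -> (forall s, 0 <= xi s) ->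
  wstep tau (dirac S0) (fun s => xi0 s + xi s / (1 - c)).
Proof.
  intros H0 H1 Hc Hr Hx0 Hx.
  exists (fun i => match i with 0%nat => dirac S0 | S k => fun s => c ^ k * rho s end),
         (fun i => match i with 0%nat => fun _ => 0 | 1%nat => xi0 | S (S k) => fun s => c ^ k * xi s end).
  split; [split|split].
  - intros [|[|i]] s; simpl; split.
    all: repeat apply Rmult_le_pos; try lra; auto; try apply dirac_nonneg; try (apply pow_le1; lra).
  - intros [|k].
    + eapply ctrans_ext. exact H0. all: intros; simpl; ring.
    + eapply ctrans_ext. apply (ctrans_scale _ _ _ (c ^ k) H1). apply pow_le1; lra.
      all: intros; simpl; ring.
  - intros s; simpl; ring.
  - intros s.
    eapply inf_ext; [|apply inf_shift' with (a := 0) (x := xi0 s + xi s / (1 - c)); [|ring]].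
    2:{ apply inf_shift' with (a := xi0 s) (x := xi s / (1 - c)); [|ring]. apply (inf_geo (xi s) c Hc). }
    intros [|[|i]]; simpl; auto; ring.
Qed.

Lemma wstep_one (X : nexpr Act) (nu : Defs.dist Act) : ctrans (dirac X) tau nu -> (forall s, 0 <= nu s) ->
  wstep tau (dirac X) nu.
Proof.
  intros H Hn. eapply wstep_ext.
  apply (wstep_geo X (fun _ => 0) nu (fun _ => 0) 0).
  - eapply ctrans_ext. exact H. all: intros; simpl; ring.
  - eapply ctrans_ext. apply (zero_ctrans _ _ H). all: intros; simpl; ring.
  - lra.
  - intros; lra.
  - auto.
  - intros; lra.
  - intros; simpl. field.
Qed.

Lemma wtrans_one (nu0 mu0 : Defs.dist Act) (X : nexpr Act) a nu :
  ctrans nu0 tau mu0 -> trans X a nu -> (forall s, 0 <= nu s) ->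
  wtrans tau (dirac X) a nu /\ wtrans_hat tau (dirac X) a nu.
Proof.
  intros H0 Ht Hn.
  assert (W : wtrans tau (dirac X) a nu).
  { exists (dirac X), nu. split; [|split].
    - eapply wstep_zero; eauto. apply dirac_nonneg.
    - constructor; auto.
    - eapply wstep_zero; eauto. }
  split; auto.
  destruct (classic (a = tau)) as [->|Hne].
  - left. split; auto. apply wstep_one; auto. constructor; auto.
  - right. split; auto.
Qed.

End W.

Lemma sumR_pos_fst {A} (lst : list (R * A)) : lst <> [] -> Forall (fun pe => 0 < fst pe) lst -> 0 < sumR (map fst lst).
Proof.
  induction lst as [|[p e] r IH]; intros Hn Hf; [congruence|].
  inversion Hf; subst. simpl in *.
  destruct r as [|y r']. simpl; lra.
  assert (0 < sumR (map fst (y :: r'))) by (apply IH; auto; congruence). lra.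
Qed.

Section Big.
Context {Act : Type}.

Lemma bigoplus_cons p e (r : list (R * nexpr Act)) : r <> [] ->
  bigoplus ((p, e) :: r) = PSum (p / (p + sumR (map fst r))) (Dirac e) (bigoplus r).
Proof. destruct r; [congruence|reflexivity]. Qed.

Lemma substP_bigoplus (s : nat -> nexpr Act) lst :
  substP s (bigoplus lst) = bigoplus (map (fun pe => (fst pe, substN s (snd pe))) lst).
Proof.
  assert (Hm : forall r0, map fst (map (fun pe : R * nexpr Act => (fst pe, substN s (snd pe))) r0) = map fst r0)
    by (intro; rewrite map_map; reflexivity).
  induction lst as [|[p e] r IH]; [reflexivity|].
  destruct r as [|y r']; [reflexivity|].
  rewrite (bigoplus_cons p e (y :: r')) by congruence.
  set (g := fun pe : R * nexpr Act => (fst pe, substN s (snd pe))) in *.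
  transitivity (PSum (p / (p + sumR (map fst (y :: r')))) (Dirac (substN s e)) (bigoplus (map g (y :: r')))).
  { rewrite <- IH. reflexivity. }
  rewrite <- (Hm (y :: r')). rewrite <- bigoplus_cons by (simpl; congruence). reflexivity.
Qed.

Lemma substN_bigsum (s : nat -> nexpr Act) lst :
  substN s (bigsum lst) = bigsum (map (substN s) lst).
Proof.
  induction lst as [|e r IH]; [reflexivity|].
  destruct r as [|y r']; [reflexivity|].
  change (bigsum (e :: y :: r')) with (Sum e (bigsum (y :: r'))).
  transitivity (Sum (substN s e) (substN s (bigsum (y :: r')))); [reflexivity|].
  rewrite IH. reflexivity.
Qed.

Lemma pstep_bigoplus (lst : list (R * nexpr Act)) mu : lst <> [] -> Forall (fun pe => 0 < fst pe) lst ->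
  pstep (bigoplus lst) mu ->
  forall s, mu s = sumR (map (fun pe => fst pe * dirac (snd pe) s) lst) / sumR (map fst lst).
Proof.
  revert mu. induction lst as [|[p e] r IH]; intros mu Hn Hf Hp s; [congruence|].
  inversion Hf; subst. simpl in H1.
  destruct r as [|y r'].
  - inversion Hp; subst. simpl. field. lra.
  - change (bigoplus ((p, e) :: y :: r')) with (PSum (p / (p + sumR (map fst (y :: r')))) (Dirac e) (bigoplus (y :: r'))) in Hp.
    inversion Hp; subst. inversion H5; subst.
    assert (Hr : 0 < sumR (map fst (y :: r'))) by (apply sumR_pos_fst; auto; congruence).
    change (pstep (bigoplus (y :: r')) nu) in H6.
    rewrite (IH nu ltac:(congruence) H2 H6 s). simpl in Hr |- *.
    field. lra.
Qed.

Lemma wf_bigoplus (lst : list (R * nexpr Act)) : Forall (fun pe => 0 < fst pe /\ wfN (snd pe)) lst -> wfP (bigoplus lst).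
Proof.
  induction lst as [|[p e] r IH]; intros Hf; [simpl; auto|].
  inversion Hf; subst. simpl in H1.
  destruct r as [|y r']; [simpl; tauto|].
  change (bigoplus ((p, e) :: y :: r')) with (PSum (p / (p + sumR (map fst (y :: r')))) (Dirac e) (bigoplus (y :: r'))).
  assert (Hr : 0 < sumR (map fst (y :: r'))).
  { apply sumR_pos_fst; [congruence|]. refine (Forall_impl _ _ H2). intros ? [? ?]; auto. }
  split; [|split; [tauto|auto]].
  split. apply Rdiv_lt_0_compat; lra.
  apply (Rmult_lt_reg_r (p + sumR (map fst (y :: r')))). lra.
  unfold Rdiv. rewrite Rmult_assoc, Rinv_l by lra. lra.
Qed.

Lemma closed_bigoplus k (lst : list (R * nexpr Act)) : Forall (fun pe => closedN_at k (snd pe)) lst -> closedP_at k (bigoplus lst).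
Proof.
  induction lst as [|[p e] r IH]; intros Hf; [simpl; auto|].
  inversion Hf; subst. simpl in H1.
  destruct r as [|y r']; [simpl; tauto|].
  change (bigoplus ((p, e) :: y :: r')) with (PSum (p / (p + sumR (map fst (y :: r')))) (Dirac e) (bigoplus (y :: r'))).
  simpl closedP_at. split; auto.
Qed.

Lemma wf_bigsum (lst : list (nexpr Act)) : Forall wfN lst -> wfN (bigsum lst).
Proof.
  induction lst as [|e r IH]; intros Hf; [simpl; auto|].
  inversion Hf; subst. destruct r as [|y r']; [simpl; auto|].
  change (bigsum (e :: y :: r')) with (Sum e (bigsum (y :: r'))). simpl; auto.
Qed.

Lemma closed_bigsum k (lst : list (nexpr Act)) : Forall (closedN_at k) lst -> closedN_at k (bigsum lst).
Proof.
  induction lst as [|e r IH]; intros Hf; [simpl; auto|].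
  inversion Hf; subst. destruct r as [|y r']; [simpl; auto|].
  change (bigsum (e :: y :: r')) with (Sum e (bigsum (y :: r'))). simpl; auto.
Qed.

Lemma cstep_bigsum_inv (lst : list (nexpr Act)) a P : cstep (bigsum lst) a P -> exists e, In e lst /\ cstep e a P.
Proof.
  induction lst as [|e r IH]; intros H; [inversion H|].
  destruct r as [|y r']. exists e; simpl; auto.
  change (bigsum (e :: y :: r')) with (Sum e (bigsum (y :: r'))) in H.
  inversion H; subst. exists e; simpl; auto.
  destruct (IH H4) as [e' [Hi Hc]]. exists e'; simpl; auto.
Qed.

Lemma cstep_bigsum (lst : list (nexpr Act)) e a P : In e lst -> cstep e a P -> cstep (bigsum lst) a P.
Proof.
  induction lst as [|e0 r IH]; intros Hi H; [inversion Hi|].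
  destruct r as [|y r'].
  - destruct Hi as [<-|[]]. exact H.
  - change (bigsum (e0 :: y :: r')) with (Sum e0 (bigsum (y :: r'))).
    destruct Hi as [<-|Hi]. apply cs_suml; auto. apply cs_sumr; auto.
Qed.

Lemma rec_trans (B : nexpr Act) a P mu : cstep B a P -> pstep (substP (sig0 (Rec B)) P) mu -> trans (Rec B) a mu.
Proof.
  intros Hc Hp. apply trans_rec. eapply cstep_trans; eauto.
Qed.

Lemma rec_moves (B : nexpr Act) a mu : trans (Rec B) a mu -> exists P, cstep B a P /\ pstep (substP (sig0 (Rec B)) P) mu.
Proof.
  intros Ht. change (Rec B) with (subst0 (Rec B) (Var 0)) in Ht.
  destruct (ctx B (Var 0) a mu Ht) as [[P [Hc _]] | [_ H]]; auto. inversion Hc.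
Qed.

End Big.

Lemma sumR_pos_in {A} (l : list A) f x : In x l -> 0 < f x -> (forall y, In y l -> 0 <= f y) -> 0 < sumR (map f l).
Proof.
  induction l as [|a l IH]; simpl; intros Hi Hx Hy; [destruct Hi|].
  destruct Hi as [<-|Hi].
  - pose proof (sumR_nonneg l f (fun y h => Hy y (or_intror h))). lra.
  - pose proof (IH Hi Hx (fun y h => Hy y (or_intror h))). pose proof (Hy a (or_introl eq_refl)). lra.
Qed.

Lemma sumR_minus {A} (l : list A) f g : sumR (map (fun x => f x - g x) l) = sumR (map f l) - sumR (map g l).
Proof. induction l; simpl; [ring|rewrite IHl; ring]. Qed.

Section Main.
Variables (Act : Type) (tau : Act) (ls : list (R * nexpr Act)) (Fx : nexpr Act).
Hypothesis Hne : ls <> [].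
Hypothesis Hls : Forall (fun pe => 0 < fst pe /\ closedN_at 1 (snd pe) /\ wfN (snd pe)) ls.
Hypothesis Hsum : sumR (map fst ls) = 1.
Hypothesis HFc : closedN_at 1 Fx.
Hypothesis HFw : wfN Fx.

Definition BL := Sum (Pre tau (bigoplus (map (fun pe => (fst pe, Sum (Var 0) (snd pe))) ls))) Fx.
Definition BR := Sum (Sum (Pre tau (Dirac (Var 0))) (bigsum (map snd ls))) Fx.
Definition LL := Rec BL.
Definition RR := Rec BR.
Definition TT e := Sum LL (subst0 LL e).
Definition muL : Defs.dist Act := fun s => sumR (map (fun pe => fst pe * dirac (TT (snd pe)) s) ls).
Definition sL P := substP (sig0 LL) P.
Definition sR P := substP (sig0 RR) P.

Lemma In_ls x : In x ls -> 0 < fst x /\ closedN_at 1 (snd x) /\ wfN (snd x).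
Proof. intros H. rewrite Forall_forall in Hls. auto. Qed.

Lemma In_ls_snd e : In e (map snd ls) -> closedN_at 1 e /\ wfN e.
Proof. intros H. apply in_map_iff in H. destruct H as [x [<- Hx]]. apply In_ls in Hx. tauto. Qed.

Lemma cexpr_LL : cexpr LL.
Proof.
  split.
  - simpl. split; auto. apply closed_bigoplus. apply Forall_map.
    apply Forall_forall. intros x Hx. apply In_ls in Hx. simpl. split; [lia|tauto].
  - simpl. split; auto. apply wf_bigoplus. apply Forall_map.
    apply Forall_forall. intros x Hx. apply In_ls in Hx. simpl. tauto.
Qed.

Lemma cexpr_RR : cexpr RR.
Proof.
  split.
  - simpl. split; auto. split; [lia|]. apply closed_bigsum. apply Forall_forall.
    intros e He. apply In_ls_snd in He. tauto.
  - simpl. split; auto. split; auto. apply wf_bigsum. apply Forall_forall.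
    intros e He. apply In_ls_snd in He. tauto.
Qed.

Lemma wf_sL P : wfP P -> wfP (sL P).
Proof. intros H. apply (proj2 wf_subst); auto. apply wf_sig0. apply cexpr_LL. Qed.
Lemma wf_sR P : wfP P -> wfP (sR P).
Proof. intros H. apply (proj2 wf_subst); auto. apply wf_sig0. apply cexpr_RR. Qed.

Lemma muL_pstep mu : pstep (sL (bigoplus (map (fun pe => (fst pe, Sum (Var 0) (snd pe))) ls))) mu -> mu = muL.
Proof.
  intros H. unfold sL in H. rewrite substP_bigoplus, map_map in H.
  pose proof (fun A B => pstep_bigoplus _ mu A B H) as Hf.
  specialize (Hf ltac:(intro Hc; apply map_eq_nil in Hc; auto)).
  specialize (Hf ltac:(apply Forall_map; apply Forall_forall; intros x Hx; apply In_ls in Hx; simpl; tauto)).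
  apply functional_extensionality. intros s. rewrite Hf. rewrite !map_map. simpl.
  change (map (fun x : R * nexpr Act => fst x) ls) with (map fst ls). rewrite Hsum. unfold Rdiv. rewrite Rinv_1, Rmult_1_r. reflexivity.
Qed.

Lemma L_tau : trans LL tau muL.
Proof.
  destruct (pstep_ex (sL (bigoplus (map (fun pe => (fst pe, Sum (Var 0) (snd pe))) ls)))) as [mu Hm].
  pose proof (muL_pstep _ Hm). subst.
  unfold LL. eapply rec_trans; [|exact Hm]. apply cs_suml. apply cs_pre.
Qed.

Lemma BL_cstep a P mu : cstep BL a P -> pstep (sL P) mu -> (a = tau /\ mu = muL) \/ cstep Fx a P.
Proof.
  intros Hc Hp. inversion Hc; subst; auto.
  inversion H3; subst. left. split; auto. apply muL_pstep; auto.
Qed.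

Lemma BR_cstep a P nu : cstep BR a P -> pstep (sR P) nu ->
  (a = tau /\ nu = dirac RR) \/ (exists e, In e (map snd ls) /\ cstep e a P) \/ cstep Fx a P.
Proof.
  intros Hc Hp. inversion Hc; subst; auto.
  inversion H3; subst.
  - inversion H4; subst. left. split; auto. inversion Hp; subst. reflexivity.
  - right; left. apply cstep_bigsum_inv; auto.
Qed.

Lemma R_tau : trans RR tau (dirac RR).
Proof.
  unfold RR. eapply rec_trans. apply cs_suml, cs_suml, cs_pre. constructor.
Qed.

Lemma L_F a P mu : cstep Fx a P -> pstep (sL P) mu -> trans LL a mu.
Proof. intros. unfold LL. eapply rec_trans; [|eauto]. apply cs_sumr; auto. Qed.

Lemma R_F a P mu : cstep Fx a P -> pstep (sR P) mu -> trans RR a mu.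
Proof. intros. unfold RR. eapply rec_trans; [|eauto]. apply cs_sumr; auto. Qed.

Lemma R_E e a P mu : In e (map snd ls) -> cstep e a P -> pstep (sR P) mu -> trans RR a mu.
Proof.
  intros. unfold RR. eapply rec_trans; [|eauto]. apply cs_suml, cs_sumr. eapply cstep_bigsum; eauto.
Qed.

Lemma TT_tau e : trans (TT e) tau muL.
Proof. apply trans_suml. apply L_tau. Qed.

Lemma TT_E e a P mu : cstep e a P -> pstep (sL P) mu -> trans (TT e) a mu.
Proof. intros. apply trans_sumr. eapply cstep_trans; eauto. Qed.

Lemma Hctr0 : ctrans (dirac LL) tau muL.
Proof. constructor. apply L_tau. Qed.

Lemma muL_nonneg s : 0 <= muL s.
Proof.
  apply sumR_nonneg. intros x Hx. apply In_ls in Hx.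
  apply Rmult_le_pos; [lra|apply dirac_nonneg].
Qed.

Lemma match_E S0 e a P nu : trans S0 tau muL -> In e (map snd ls) -> cstep e a P -> pstep (sL P) nu ->
  wtrans tau (dirac S0) a nu /\ wtrans_hat tau (dirac S0) a nu.
Proof.
  intros HS0 He Hc Hp.
  set (Te := TT e).
  set (ind := fun x : R * nexpr Act => if excluded_middle_informative (TT (snd x) = Te) then fst x else 0).
  set (m := sumR (map ind ls)).
  assert (Hind : forall x, In x ls -> 0 <= ind x <= fst x).
  { intros x Hx. apply In_ls in Hx. unfold ind. destruct excluded_middle_informative; lra. }
  assert (Hm1 : m <= 1).
  { rewrite <- Hsum. apply sumR_le. intros x Hx. apply Hind; auto. }
  assert (Hm0 : 0 < m).
  { apply in_map_iff in He. destruct He as [x [Hx1 Hx2]].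
    apply (sumR_pos_in ls ind x); auto.
    - unfold ind. destruct excluded_middle_informative as [_|n].
      + apply In_ls in Hx2; tauto.
      + exfalso. apply n. subst. reflexivity.
    - intros y Hy; apply Hind; auto. }
  assert (Hew : closedN_at 1 e /\ wfN e) by (apply In_ls_snd; auto).
  assert (Hnu : forall s, 0 <= nu s).
  { eapply pstep_nonneg; eauto. apply wf_sL. eapply cstep_wf; eauto. tauto. }
  assert (HTe : trans Te a nu) by (eapply TT_E; eauto).
  assert (Hsplit : forall s, muL s = sumR (map (fun x => (fst x - ind x) * dirac (TT (snd x)) s) ls) + m * dirac Te s).
  { intros s. unfold muL. rewrite Rmult_comm. unfold m. rewrite <- sumR_scale. rewrite <- sumR_plus.
    apply sumR_ext. intros x _. unfold ind. destruct excluded_middle_informative as [E|E].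
    - rewrite E. ring.
    - ring. }
  assert (Hw1 : sumR (map (fun x => fst x - ind x) ls) = 1 - m).
  { rewrite sumR_minus, Hsum. reflexivity. }
  assert (Reach : wstep tau (dirac S0) (dirac Te)).
  { set (rho := fun s => sumR (map (fun x => (fst x - ind x) * dirac (TT (snd x)) s) ls)).
    eapply wstep_ext.
    apply (wstep_geo tau S0 rho (fun s => m * dirac Te s) (fun s => (1 - m) * (m * dirac Te s)) (1 - m)).
    - eapply ctrans_ext. constructor. exact HS0. intros; reflexivity. intros s. apply Hsplit.
    - eapply ctrans_ext.
      apply (ctrans_list tau (map (fun x => (fst x - ind x, dirac (TT (snd x)), muL)) ls) (dirac LL, muL)).
      + exact Hctr0.
      + intros y Hy. apply in_map_iff in Hy. destruct Hy as [x [<- Hx]]. simpl.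
        split. pose proof (Hind x Hx). lra. constructor. apply TT_tau.
      + rewrite map_map. simpl. rewrite Hw1. lra.
      + intros s. cbv beta. rewrite map_map. reflexivity.
      + intros s. cbv beta. rewrite map_map. simpl.
        transitivity (sumR (map (fun x => muL s * (fst x - ind x)) ls)).
        { apply sumR_ext. intros; ring. }
        rewrite sumR_scale, Hw1, Hsplit. unfold rho. ring.
    - lra.
    - intros s. apply sumR_nonneg. intros x Hx. pose proof (Hind x Hx).
      apply Rmult_le_pos; [lra|apply dirac_nonneg].
    - intros s. pose proof (dirac_nonneg Te s). apply Rmult_le_pos; lra.
    - intros s. pose proof (dirac_nonneg Te s).
      apply Rmult_le_pos; [lra|apply Rmult_le_pos; lra].
    - intros s. simpl. field. lra. }
  assert (W : wtrans tau (dirac S0) a nu).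
  { exists (dirac Te), nu. split; [exact Reach|split].
    - constructor. exact HTe.
    - eapply wstep_zero; [exact Hctr0|exact Hnu]. }
  split; auto.
  destruct (classic (a = tau)) as [Ha|Ha]; [|right; auto].
  subst a. left. split; auto.
  eapply wstep_ext.
  apply (wstep_geo tau S0 muL (fun _ => 0) (fun s => m * nu s) (1 - m)).
  - eapply ctrans_ext. constructor. exact HS0. intros; reflexivity. intros; ring.
  - eapply ctrans_ext.
    apply (ctrans_list tau (map (fun x => (fst x, dirac (TT (snd x)),
              if excluded_middle_informative (TT (snd x) = Te) then nu else muL)) ls) (dirac LL, muL)).
    + exact Hctr0.
    + intros y Hy. apply in_map_iff in Hy. destruct Hy as [x [<- Hx]]. simpl.
      split. apply In_ls in Hx; lra.
      destruct excluded_middle_informative as [E|E].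
      * rewrite E. constructor. exact HTe.
      * constructor. apply TT_tau.
    + rewrite map_map. simpl. change (map (fun x : R * nexpr Act => fst x) ls) with (map fst ls). lra.
    + intros s. cbv beta. rewrite map_map. reflexivity.
    + intros s. cbv beta. rewrite map_map. simpl.
      transitivity (sumR (map (fun x => muL s * (fst x - ind x) + nu s * ind x) ls)).
      { apply sumR_ext. intros x _. unfold ind. destruct excluded_middle_informative; ring. }
      rewrite sumR_plus, !sumR_scale, Hw1. unfold m. ring.
  - lra.
  - apply muL_nonneg.
  - intros; lra.
  - intros s. specialize (Hnu s). apply Rmult_le_pos; lra.
  - intros s. simpl. field. lra.
Qed.


Definition Rl (X Y : nexpr Act) : Prop :=
  (exists G, closedN_at 1 G /\ wfN G /\ X = subst0 LL G /\ Y = subst0 RR G) \/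
  (exists e, In e (map snd ls) /\ X = TT e /\ Y = RR).

Lemma Rl_LR : Rl LL RR.
Proof. left. exists (Var 0). simpl. repeat split; auto. Qed.

Lemma lift_ctx P : closedP_at 1 P -> wfP P -> forall mu nu, pstep (sL P) mu -> pstep (sR P) nu -> lift Rl mu nu.
Proof.
  induction P as [G|p P1 IH1 P2 IH2]; intros Hc Hw mu nu H1 H2.
  - inversion H1; subst. inversion H2; subst. constructor. left. exists G.
    simpl in Hc, Hw. repeat split; auto.
  - simpl in Hc, Hw.
    destruct Hc as [Hc1 Hc2]. destruct Hw as [Hp [Hw1 Hw2]].
    destruct (pstep_ex (sL P1)) as [m1 Hm1]. destruct (pstep_ex (sL P2)) as [m2 Hm2].
    destruct (pstep_ex (sR P1)) as [n1 Hn1]. destruct (pstep_ex (sR P2)) as [n2 Hn2].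
    assert (E1 := pstep_fun _ _ _ H1 (pstep_psum p _ _ _ _ Hm1 Hm2)).
    assert (E2 := pstep_fun _ _ _ H2 (pstep_psum p _ _ _ _ Hn1 Hn2)).
    subst mu nu.
    eapply lift_ext.
    apply (lift_list Rl [(p, m1, n1); (1 - p, m2, n2)] (m1, n1)).
    + simpl. eapply IH1; eauto.
    + intros x [<-|[<-|[]]]; simpl; split; try lra; eauto.
    + simpl. lra.
    + intros s; simpl; ring.
    + intros s; simpl; ring.
Qed.

Lemma lift_muL : lift Rl muL (dirac RR).
Proof.
  eapply lift_ext.
  apply (lift_list Rl (map (fun x => (fst x, dirac (TT (snd x)), dirac RR)) ls) (dirac LL, dirac RR)).
  - constructor. apply Rl_LR.
  - intros y Hy. apply in_map_iff in Hy. destruct Hy as [x [<- Hx]]. simpl.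
    split. apply In_ls in Hx; lra.
    constructor. right. exists (snd x). split; auto. apply in_map; auto.
  - rewrite map_map. simpl. change (map (fun x : R * nexpr Act => fst x) ls) with (map fst ls). lra.
  - intros s. cbv beta. rewrite map_map. reflexivity.
  - intros s. cbv beta. rewrite map_map. simpl.
    transitivity (sumR (map (fun x => dirac RR s * fst x) ls)).
    { apply sumR_ext. intros; ring. }
    rewrite sumR_scale. rewrite Hsum. ring.
Qed.

Lemma sL_nonneg P mu : wfP P -> pstep (sL P) mu -> forall s, 0 <= mu s.
Proof. intros. eapply pstep_nonneg; eauto. apply wf_sL; auto. Qed.
Lemma sR_nonneg P mu : wfP P -> pstep (sR P) mu -> forall s, 0 <= mu s.
Proof. intros. eapply pstep_nonneg; eauto. apply wf_sR; auto. Qed.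

Definition both (X : nexpr Act) a nu := wtrans tau (dirac X) a nu /\ wtrans_hat tau (dirac X) a nu.

Lemma HX_L Y : (forall a nu, trans RR a nu -> trans Y a nu) ->
  forall a mu, trans LL a mu -> exists nu, both Y a nu /\ lift Rl mu nu.
Proof.
  intros HY a mu Ht. unfold LL in Ht. apply rec_moves in Ht. destruct Ht as [P [Hc Hp]].
  destruct (BL_cstep a P mu Hc Hp) as [[-> ->]|HF].
  - exists (dirac RR). split; [|apply lift_muL].
    eapply wtrans_one. exact Hctr0. apply HY, R_tau. apply dirac_nonneg.
  - destruct (pstep_ex (sR P)) as [nu Hnu]. exists nu.
    assert (wfP P) by (eapply cstep_wf; eauto).
    split.
    + eapply wtrans_one. exact Hctr0. apply HY. eapply R_F; eauto. eapply sR_nonneg; eauto.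
    + eapply lift_ctx; eauto. eapply cstep_closed; eauto.
Qed.

Lemma HY_R X : (forall a mu, trans LL a mu -> trans X a mu) ->
  forall a nu, trans RR a nu -> exists mu, both X a mu /\ lift Rl mu nu.
Proof.
  intros HX a nu Ht. unfold RR in Ht. apply rec_moves in Ht. destruct Ht as [P [Hc Hp]].
  destruct (BR_cstep a P nu Hc Hp) as [[-> ->]|[[e [He Hce]]|HF]].
  - exists muL. split; [|apply lift_muL].
    eapply wtrans_one. exact Hctr0. apply HX, L_tau. apply muL_nonneg.
  - destruct (pstep_ex (sL P)) as [mu Hmu]. exists mu.
    assert (Hew := In_ls_snd e He).
    split.
    + eapply match_E; eauto. apply HX, L_tau.
    + eapply lift_ctx; eauto. eapply cstep_closed; eauto; tauto. eapply cstep_wf; eauto; tauto.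
  - destruct (pstep_ex (sL P)) as [mu Hmu]. exists mu.
    assert (wfP P) by (eapply cstep_wf; eauto).
    split.
    + eapply wtrans_one. exact Hctr0. apply HX. eapply L_F; eauto. eapply sL_nonneg; eauto.
    + eapply lift_ctx; eauto. eapply cstep_closed; eauto.
Qed.

Lemma ctx_pair G a P : cstep G a P -> closedN_at 1 G -> wfN G ->
  exists mu nu, pstep (sL P) mu /\ pstep (sR P) nu /\ both (subst0 LL G) a mu /\ both (subst0 RR G) a nu /\ lift Rl mu nu.
Proof.
  intros Hc Hcl Hw.
  destruct (pstep_ex (sL P)) as [mu Hmu]. destruct (pstep_ex (sR P)) as [nu Hnu].
  assert (wfP P) by (eapply cstep_wf; eauto).
  exists mu, nu. split; auto. split; auto. split; [|split].
  - eapply wtrans_one. exact Hctr0. eapply cstep_trans; eauto. eapply sL_nonneg; eauto.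
  - eapply wtrans_one. exact Hctr0. eapply cstep_trans; eauto. eapply sR_nonneg; eauto.
  - eapply lift_ctx; eauto. eapply cstep_closed; eauto.
Qed.

Lemma bisim : weak_bisim tau Rl.
Proof.
  split.
  - intros X Y [[G [Hc [Hw [-> ->]]]] | [e [He [-> ->]]]].
    + split; apply cexpr_subst0; auto. apply cexpr_LL. apply cexpr_RR.
    + split; [|apply cexpr_RR]. assert (Hew := In_ls_snd e He).
      change (TT e) with (subst0 LL (Sum (Var 0) e)). apply cexpr_subst0. apply cexpr_LL.
      simpl; split; [lia|tauto]. simpl; tauto.
  - intros X Y [[G [Hc [Hw [-> ->]]]] | [e [He [-> ->]]]]; split.
    + intros a mu Ht. unfold LL in Ht. destruct (ctx BL G a mu Ht) as [[P [Hcs Hp]] | [Hu [P [Hcs Hp]]]].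
      * destruct (ctx_pair G a P Hcs Hc Hw) as [mu' [nu [H1 [H2 [H3 [H4 H5]]]]]].
        rewrite (pstep_fun _ _ _ Hp H1). exists nu. split; auto. apply H4.
      * assert (HL : trans LL a mu) by (unfold LL; eapply rec_trans; eauto).
        destruct (HX_L (subst0 RR G) (fun a nu h => ug_trans G RR a nu Hu h) a mu HL) as [nu [Hb Hl]].
        exists nu. split; auto. apply Hb.
    + intros a nu Ht. unfold RR in Ht. destruct (ctx BR G a nu Ht) as [[P [Hcs Hp]] | [Hu [P [Hcs Hp]]]].
      * destruct (ctx_pair G a P Hcs Hc Hw) as [mu [nu' [H1 [H2 [H3 [H4 H5]]]]]].
        rewrite (pstep_fun _ _ _ Hp H2). exists mu. split; auto. apply H3.
      * assert (HR : trans RR a nu) by (unfold RR; eapply rec_trans; eauto).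
        destruct (HY_R (subst0 LL G) (fun a mu h => ug_trans G LL a mu Hu h) a nu HR) as [mu [Hb Hl]].
        exists mu. split; auto. apply Hb.
    + intros a mu Ht. assert (Hew := In_ls_snd e He).
      change (TT e) with (subst0 (Rec BL) (Sum (Var 0) e)) in Ht.
      destruct (ctx BL _ a mu Ht) as [[P [Hcs Hp]] | [Hu [P [Hcs Hp]]]].
      * inversion Hcs; subst. inversion H3.
        destruct (pstep_ex (sR P)) as [nu Hnu]. exists nu.
        assert (wfP P) by (eapply cstep_wf; eauto; tauto).
        split.
        -- eapply wtrans_one. exact Hctr0. eapply R_E; eauto. eapply sR_nonneg; eauto.
        -- eapply lift_ctx; eauto. eapply cstep_closed; eauto; tauto.
      * assert (HL : trans LL a mu) by (unfold LL; eapply rec_trans; eauto).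
        destruct (HX_L RR (fun a nu h => h) a mu HL) as [nu [Hb Hl]].
        exists nu. split; auto. apply Hb.
    + intros a nu Ht.
      destruct (HY_R (TT e) (fun a mu h => trans_suml _ _ a mu h) a nu Ht) as [mu [Hb Hl]].
      exists mu. split; auto. apply Hb.
Qed.

Lemma ccong_LR : ccong tau LL RR.
Proof.
  split.
  - intros a mu Ht. destruct (HX_L RR (fun a nu h => h) a mu Ht) as [nu [Hb Hl]].
    exists nu. split. apply Hb. eapply lift_mono; [|exact Hl].
    intros x y H. exists Rl. split; auto. apply bisim.
  - intros a nu Ht. destruct (HY_R LL (fun a mu h => h) a nu Ht) as [mu [Hb Hl]].
    exists mu. split. apply Hb. eapply lift_mono; [|exact Hl].
    intros x y H. exists Rl. split; auto. apply bisim.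
Qed.

End Main.

Theorem mainTheorem5 (Act : Type) (tau : Act)
  (l : list (R * nexpr Act)) (F : nexpr Act) :
  l <> [] ->
  Forall (fun pe => 0 < fst pe /\ wfN (snd pe)) l ->
  sumR (map fst l) = 1 ->
  wfN F ->
  cong tau
    (Rec (Sum (Pre tau (bigoplus (map (fun pe => (fst pe, Sum (Var O) (snd pe))) l))) F))
    (Rec (Sum (Sum (Pre tau (Dirac (Var O))) (bigsum (map snd l))) F)).
Proof.
  intros Hne Hl Hsum HF s Hs.
  assert (Hc : forall n, closedN_at 1 (Defs.up s n)).
  { intros [|n]; simpl. lia. eapply (proj1 closed_ren). apply (Hs n). intros; lia. }
  assert (Hw : forall n, wfN (Defs.up s n)).
  { intros [|n]; simpl. auto. apply (proj1 wf_ren). apply (Hs n). }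
  set (ls := map (fun pe => (fst pe, substN (Defs.up s) (snd pe))) l).
  set (Fx := substN (Defs.up s) F).
  assert (E1 : substN s (Rec (Sum (Pre tau (bigoplus (map (fun pe => (fst pe, Sum (Var O) (snd pe))) l))) F))
               = LL Act tau ls Fx).
  { unfold LL, BL. simpl substN. rewrite substP_bigoplus. unfold ls, Fx. rewrite !map_map. reflexivity. }
  assert (E2 : substN s (Rec (Sum (Sum (Pre tau (Dirac (Var O))) (bigsum (map snd l))) F))
               = RR Act tau ls Fx).
  { unfold RR, BR. simpl substN. rewrite substN_bigsum. unfold ls, Fx. rewrite !map_map. reflexivity. }
  rewrite E1, E2. apply ccong_LR.
  - unfold ls. intro H. apply map_eq_nil in H. auto.
  - unfold ls. apply Forall_map. rewrite Forall_forall in *. intros x Hx. simpl.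
    destruct (Hl x Hx) as [Hp Hx']. split; auto. split.
    + apply (proj1 closed_subst_all). auto.
    + apply (proj1 wf_subst); auto.
  - unfold ls. rewrite map_map. exact Hsum.
  - apply (proj1 closed_subst_all). auto.
  - apply (proj1 wf_subst); auto.
Qed.
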